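(* Let $d\ge1$ and $0\le r<d$ be integers, and let $\zeta_{2d}=e^{\pi \mathrm{i}/d}$. Then $\operatorname{num}(r,\zeta_{2d})\neq 0$.
   Context: A partition $\lambda$ of $n\ge 0$ (written $\lambda\vdash n$) is a finite nonincreasing sequence of positive integers summing to $n$; $m_\lambda(i)$ denotes the number of parts of $\lambda$ equal to $i$. For $\lambda\vdash n$ define $h_\lambda(x)=\prod_{i\ge1}(1+x^i)^{\lfloor n/i\rfloor-m_\lambda(i)}\in\mathbb{Z}[x]$. Let $G(n,x)=\gcd\{h_\lambda(x):\lambda\vdash n\}$ in $\mathbb{Z}[x]$ (normalized with positive leading coefficient) and $\operatorname{num}(n,x)=\frac{1}{G(n,x)}\sum_{\lambda\vdash n}h_\lambda(x)$. Conventions for $n=0$: $G(0,x)=1$, $h_\emptyset(x)=1$, $\operatorname{num}(0,x)=1$. *)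

(* Defs.v *)
From mathcomp Require Import all_boot all_algebra all_field.
Set Implicit Arguments. Unset Strict Implicit. Unset Printing Implicit Defensive.
Import GRing.Theory Num.Theory.
Local Open Scope ring_scope.

(* A partition of n is encoded as its zero-padded sequence of parts
   f 0 >= f 1 >= ... >= f (n-1) >= 0 with sum n (at most n nonzero parts,
   each <= n); the positive parts are the nonzero entries. *)
Definition partn (n : nat) := {ffun 'I_n -> 'I_n.+1}.

Definition is_partn (n : nat) (f : partn n) : bool :=
  [forall i : 'I_n, forall j : 'I_n, (i <= j)%N ==> (f j <= f i)%N]
  && (\sum_(i < n) (f i : nat) == n)%N.

(* m_lambda(k) : number of parts equal to k (used for k >= 1) *)
Definition mult (n : nat) (f : partn n) (k : nat) : nat :=
  #|[set i : 'I_n | (f i : nat) == k]|.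

(* h_lambda(x) = prod_{i>=1} (1+x^i)^(floor(n/i) - m_lambda(i));
   factors with i > n are 1. *)
Definition hpoly (n : nat) (f : partn n) : {poly int} :=
  \prod_(1 <= i < n.+1) (1 + 'X^i) ^+ (n %/ i - mult f i).

Definition sum_h (n : nat) : {poly int} :=
  \sum_(f : partn n | is_partn f) hpoly f.

Definition zdvd (q p : {poly int}) : Prop := exists s : {poly int}, p = q * s.

Definition is_G (n : nat) (g : {poly int}) : Prop :=
  (forall f : partn n, is_partn f -> zdvd g (hpoly f)) /\
  (forall q : {poly int}, (forall f : partn n, is_partn f -> zdvd q (hpoly f)) -> zdvd q g) /\
  0 < lead_coef g.

(* zeta_{2d} = e^{pi i / d}: d.-root (-1) is the d-th root of -1 with
   minimal nonnegative argument *)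
Definition zeta2 (d : nat) : algC := d.-root (-1).

(* Main.v *)
Require Import Defs.
From mathcomp Require Import all_boot all_algebra all_field.
From mathcomp Require Import all_order polyrcf.
From mathcomp Require Import ring lra.
Import Defs.
Import Order.TTheory GRing.Theory Num.Theory.
Set Implicit Arguments. Unset Strict Implicit. Unset Printing Implicit Defensive.

Lemma sum_shift1 n (F : nat -> nat) : F 0%N = 0%N ->
  (\sum_(1 <= i < n.+1) F i = \sum_(i < n.+1) F i)%N.
Proof.
by move=> F0; rewrite -(big_mkord xpredT F) (big_ltn (ltn0Sn n)) F0 add0n.
Qed.

Lemma mult_sum r (f : partn r) : is_partn f ->
  (\sum_(i < r.+1) i * mult f i = r)%N.
Proof.
case/andP => _ /eqP hs.
rewrite -[in RHS]hs.
have inner j : (\sum_(i < r.+1) (((f j : nat) == i) * i) = f j)%N.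
  rewrite (eq_bigr (fun i : 'I_r.+1 => if i == f j then (i : nat) else 0%N)); last first.
    by move=> i _; rewrite (inj_eq val_inj) eq_sym; case: eqP => _; rewrite ?mul1n ?mul0n.
  by rewrite -big_mkcond big_pred1_eq.
rewrite (eq_bigr (fun j => \sum_(i < r.+1) (((f j : nat) == i) * i))%N); last by move=> j _; rewrite inner.
rewrite exchange_big /=; apply: eq_bigr => i _.
rewrite /mult -sum1_card big_mkcond big_distrr /=.
apply: eq_bigr => j _; rewrite in_set; case: eqP => _; by rewrite ?mul1n ?mul0n ?muln1 ?muln0.
Qed.

Definition Kc (r : nat) : nat := (\sum_(1 <= i < r.+1) i * (r %/ i) - r)%N.

Lemma expo_sum r (f : partn r) : is_partn f ->
  (\sum_(1 <= i < r.+1) i * (r %/ i - mult f i) = Kc r)%N.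
Proof.
move=> hf; have hs := mult_sum hf.
have le i : (i * mult f i <= r)%N.
  case: (ltnP i r.+1) => ir.
    apply: (@leq_trans (\sum_(k < r.+1) k * mult f k)%N); last by rewrite hs.
    by rewrite (bigD1 (Ordinal ir)) //= leq_addr.
  suff -> : mult f i = 0%N by rewrite muln0.
  apply/eqP; rewrite cards_eq0; apply/eqP/setP => j; rewrite in_set in_set0.
  by apply/negP => /eqP e; have := ltn_ord (f j); rewrite e ltnNge ir.
have le2 i : (i * mult f i <= i * (r %/ i))%N.
  case: i => [|i]; first by rewrite !mul0n.
  by rewrite leq_mul2l leq_divRL // mulnC le orbT.
rewrite /Kc (eq_big_nat _ _ (F2 := fun i => i * (r %/ i) - i * mult f i)%N); last first.
  by move=> i /andP [i1 _]; rewrite mulnBr.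
rewrite sumnB; last by move=> i _; apply: le2.
congr (_ - _)%N.
by rewrite sum_shift1 ?mul0n.
Qed.

Definition f0 (r : nat) : partn r := [ffun j : 'I_r => inord (if (j : nat) == 0%N then r else 0%N)].

Lemma f0E r (j : 'I_r) : (f0 r j : nat) = if (j : nat) == 0%N then r else 0%N.
Proof. by rewrite ffunE inordK //; case: eqP. Qed.

Lemma f0_partn r : is_partn (f0 r).
Proof.
apply/andP; split.
  apply/forallP => i; apply/forallP => j; apply/implyP => ij.
  rewrite !f0E; case: eqP => [j0|_]; last by [].
  by move: ij; rewrite j0 leqn0 => ->.
apply/eqP; case: r => [|r]; first by rewrite big_ord0.
rewrite big_ord_recl f0E /= big1 ?addn0 // => j _; by rewrite f0E.
Qed.

Local Open Scope ring_scope.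

Fixpoint Qv {R : pzRingType} (x : R) (k : nat) : R :=
  match k with
  | O => 2
  | S O => 1
  | S ((S k') as k1) => Qv x k1 - x * Qv x k'
  end.

Lemma QvSS {R : pzRingType} (x : R) k : Qv x k.+2 = Qv x k.+1 - x * Qv x k.
Proof. by []. Qed.

Lemma Qv_ind2 (P : nat -> Prop) : P 0%N -> P 1%N -> (forall k, P k -> P k.+1 -> P k.+2) -> forall k, P k.
Proof.
move=> P0 P1 IH k; suff: P k /\ P k.+1 by case.
elim: k => [|k [Hk Hk1]]; first by split.
by split => //; apply: IH.
Qed.

Lemma Qv_morph (R S : pzRingType) (f : {rmorphism R -> S}) x k : f (Qv x k) = Qv (f x) k.
Proof.
elim/Qv_ind2: k => [|| k IH1 IH2]; first by rewrite /= rmorphD rmorph1.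
  by rewrite /= rmorph1.
by rewrite !QvSS rmorphB rmorphM IH1 IH2.
Qed.

Lemma Qv_ident (y : algC) : 1 + y != 0 -> forall k,
  1 + y ^+ k = Qv (y / (1 + y) ^+ 2) k * (1 + y) ^+ k.
Proof.
move=> u0; elim/Qv_ind2 => [||k IH1 IH2]; first by rewrite /= expr0 mulr1.
  by rewrite /= expr1 mul1r.
have uk0 : (1 + y) ^+ k != 0 by rewrite expf_neq0.
have E1 : Qv (y / (1 + y) ^+ 2) k = (1 + y ^+ k) / (1 + y) ^+ k.
  by rewrite IH1 mulfK.
have E2 : Qv (y / (1 + y) ^+ 2) k.+1 = (1 + y ^+ k.+1) / (1 + y) ^+ k.+1.
  by rewrite IH2 mulfK // expf_neq0.
rewrite QvSS E1 E2 !exprS.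
move: (y ^+ k) ((1 + y) ^+ k) uk0 => Y W W0.
by field; rewrite W0 u0.
Qed.

Lemma Kre (y : algC) : y * y^* = 1 -> 1 + y != 0 ->
  y / (1 + y) ^+ 2 = (2 + 2 * 'Re y)^-1 /\ 2 + 2 * 'Re y != 0.
Proof.
move=> yc u0.
have y0 : y != 0 by apply/eqP => y0; move: yc; rewrite y0 mul0r => /eqP; rewrite eq_sym oner_eq0.
have cy : y^* = y^-1 by rewrite -[y^*]mul1r -(mulVf y0) -mulrA yc mulr1.
have E : 2 + 2 * 'Re y = (1 + y) ^+ 2 / y.
  by rewrite ReE cy; field.
have n0 : 2 + 2 * 'Re y != 0 by rewrite E mulf_neq0 ?invr_eq0 ?expf_neq0.
split => //; rewrite E; field; by rewrite y0 u0.
Qed.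

Lemma unitRe (w : algC) : `|w| = 1 -> 1 <= 'Re w -> w = 1.
Proof.
move=> nw rw.
have h := normC2_Re_Im w; rewrite nw expr1n in h.
have r1 : 1 <= 'Re w ^+ 2 by rewrite exprn_ege1.
have i0 : 'Im w ^+ 2 = 0.
  apply/eqP; rewrite eq_le -realEsqr Creal_Im andbT.
  have -> : 'Im w ^+ 2 = 1 - 'Re w ^+ 2 by rewrite h addrC addKr.
  by rewrite subr_le0.
have iw : 'Im w = 0 by apply/eqP; rewrite -sqrf_eq0 i0.
have r2 : 'Re w ^+ 2 = 1 by rewrite h i0 addr0.
have : ('Re w == 1) || ('Re w == -1) by rewrite -sqrf_eq1 r2.
case/orP => /eqP rr.
  by rewrite [w]Crect rr iw mulr0 addr0.
by move: rw; rewrite rr => /(le_trans ler01); rewrite ler0N1.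
Qed.

Lemma mk_root (t : algR) d : 4^-1 < t -> Qv t d = 0 ->
  exists y : algC, y ^+ d = -1 /\ 0 <= 'Im y /\ 'Re y = algRval ((2 * t)^-1 - 1).
Proof.
move=> t4 qd.
have t0 : 0 < t by apply: lt_trans t4; rewrite invr_gt0; lra.
set v := (2 * t)^-1.
have v0 : 0 < v by rewrite invr_gt0; lra.
have vt : v * (2 * t) = 1 by rewrite mulVf //; lra.
have v2 : v < 2 by nra.
set a : algR := v - 1.
have h1a : 0 < 1 - a ^+ 2 by rewrite /a; nra.
have aR : algRval a \is Num.real by apply: algRvalP.
pose s := sqrtC (algRval (1 - a ^+ 2)).
have s0 : 0 <= s by rewrite sqrtC_ge0; exact: ltW.
have sR : s \is Num.real by exact: ger0_real.
pose y := algRval a + 'i * s.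
have Rey : 'Re y = algRval a by rewrite Re_rect.
have Imy : 'Im y = s by rewrite Im_rect.
have yc : y * y^* = 1.
  rewrite conjC_rect // /y.
  have -> : (algRval a + 'i * s) * (algRval a - 'i * s) = algRval a ^+ 2 - 'i ^+ 2 * s ^+ 2 by ring.
  rewrite sqrCi sqrtCK rmorphB rmorph1 /=.
  ring.
have u0 : 1 + y != 0.
  apply/eqP => e; have ye : y = -1 by apply/eqP; rewrite -subr_eq0 opprK addrC e.
  have : 'Re y = -1 by rewrite ye; apply/Creal_ReP; rewrite rpredN rpred1.
  rewrite Rey => /(congr1 (fun z => z + 1)); rewrite addNr.
  have -> : algRval a + 1 = algRval (a + 1) by [].
  move=> /eqP; rewrite -(rmorph0 algRval) => /eqP /val_inj; rewrite /a; lra.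
have [K _] := Kre yc u0.
have E : (2 + 2 * a)^-1 = t :> algR by rewrite /a /v; field; lra.
have Kt : y / (1 + y) ^+ 2 = algRval t.
  by rewrite K Rey -E.
exists y; split; last by rewrite Imy.
have := Qv_ident u0 d; rewrite Kt -(Qv_morph algRval) qd rmorph0 mul0r.
by move/eqP; rewrite addrC addr_eq0 => /eqP.
Qed.

Lemma Qv_quarter (k : nat) : Qv (4^-1 : algR) k = 2 * (2^-1) ^+ k.
Proof.
elim/Qv_ind2: k => [||k IH1 IH2]; first by rewrite /= expr0 mulr1.
  by rewrite /= expr1; field.
by rewrite QvSS IH1 IH2 !exprS; field.
Qed.

Lemma Qv_quarter_gt0 k : 0 < Qv (4^-1 : algR) k.
Proof. by rewrite Qv_quarter mulr_gt0 ?exprn_gt0 // invr_gt0; lra. Qed.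

Lemma twozero (t : algR) : t != 0 -> forall k, Qv t k = 0 -> Qv t k.+1 = 0 -> False.
Proof.
move=> t0; elim => [|k IH]; first by move=> /= /eqP; rewrite pnatr_eq0.
move=> h1 h2; apply: (IH _ h1); move: h2; rewrite QvSS h1 sub0r => /eqP.
by rewrite oppr_eq0 mulf_eq0 (negPf t0) => /eqP.
Qed.

Lemma nonneg_nz (t : algR) d : 0 < t -> (forall i, (i <= d)%N -> 0 <= Qv t i) ->
  forall j, (j < d)%N -> Qv t j != 0.
Proof.
move=> t0 hi [|j] jd; first by rewrite /= pnatr_eq0.
apply/eqP => qj.
have h := hi j.+2 jd; rewrite QvSS qj sub0r oppr_ge0 pmulr_rle0 // in h.
have hj : Qv t j = 0 by apply/eqP; rewrite eq_le h hi // (leq_trans (leqnSn _)) // ltnW.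
by apply: (twozero (lt0r_neq0 t0) hj qj).
Qed.

Lemma Qv_horner (x : algR) k : (Qv ('X : {poly algR}) k).[x] = Qv x k.
Proof. have := Qv_morph (horner_eval x) ('X) k. by rewrite /= !horner_evalE hornerX. Qed.

Lemma ivt_part (k0 : algR) d : 4^-1 < k0 -> Qv k0 d = 0 ->
  exists t : algR, [/\ 4^-1 < t, t <= k0, Qv t d = 0 & forall i, (i < d)%N -> 0 < Qv t i].
Proof.
move=> k4 qd.
pose P := \prod_(j < d.+1) Qv ('X : {poly algR}) j.
have PE x : P.[x] = \prod_(j < d.+1) Qv x j.
  by rewrite horner_prod; apply: eq_bigr => j _; rewrite Qv_horner.
have P0 : P != 0.
  apply/eqP => e; have := PE 4^-1; rewrite e horner0 => h.
  have : 0 < \prod_(j < d.+1) Qv (4^-1 : algR) j by apply: prodr_gt0 => j _; exact: Qv_quarter_gt0.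
  by rewrite -h ltxx.
have Pk0 : root P k0.
  by rewrite rootE PE (bigD1 (Ordinal (ltnSn d))) //= qd mul0r.
have rootQ x i : (i <= d)%N -> Qv x i = 0 -> root P x.
  move=> id qi; rewrite rootE PE (bigD1 (Ordinal (id : (i < d.+1)%N))) //= qi mul0r //.
have k0in : k0 \in `]4^-1, k0 + 1[ by rewrite in_itv /= k4 ltrDl ltr01.
case: (next_rootP P (4^-1) (k0 + 1)) => [p0 | t np0 pt0 ht hno | c np0 hc hno].
- by rewrite p0 eqxx in P0.
- have t4 : 4^-1 < t by rewrite (itvP ht).
  have tk : t <= k0.
    rewrite leNgt; apply/negP => kt.
    by have := hno k0; rewrite in_itv /= k4 kt Pk0 => /(_ isT).
  have t0 : 0 < t by apply: lt_trans t4; rewrite invr_gt0 ltr0n.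
  have nn i : (i <= d)%N -> 0 <= Qv t i.
    move=> id; rewrite leNgt; apply/negP => qneg.
    have [x xin rx] : {x | x \in `]4^-1, t[ & root (Qv ('X : {poly algR}) i) x}.
      apply: poly_ivtoo; first exact: ltW.
      by rewrite !Qv_horner pmulr_rlt0 // Qv_quarter_gt0.
    move: rx; rewrite rootE Qv_horner => /eqP /(rootQ x i id) rP.
    by move: (hno x xin); rewrite rP.
  have nz := nonneg_nz t0 nn.
  have qtd : Qv t d = 0.
    move: pt0; rewrite PE => /eqP /prodf_eq0 [j _ /eqP qj].
    have := ltn_ord j; rewrite ltnS leq_eqVlt => /orP [/eqP jd | jd].
      by rewrite -jd.
    by move: (nz j jd); rewrite qj eqxx.
  exists t; split => // i id.
  by rewrite lt_neqAle eq_sym nz // nn // ltnW.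
- by move: (hno k0 k0in); rewrite Pk0.
Qed.

Lemma Qv_val (x : algR) k : algRval (Qv x k) = Qv (algRval x) k.
Proof. exact: (Qv_morph algRval). Qed.

Lemma ReNeg (y : algC) : 'Re (- y) = - 'Re y.
Proof. by rewrite !ReE rmorphN /=; field. Qed.

Lemma unit_norm (w : algC) n : (0 < n)%N -> w ^+ n = 1 \/ w ^+ n = -1 -> `|w| = 1.
Proof.
move=> n0 h; apply/eqP; rewrite -(pexpr_eq1 n0) ?normr_ge0 // -normrX.
by case: h => ->; rewrite ?normrN normr1.
Qed.

Lemma GK d : (2 <= d)%N ->
  1 + d.-root (-1 : algC) != 0 /\
  forall i, (i < d)%N -> 0 < (1 + d.-root (-1 : algC) ^+ i) / (1 + d.-root (-1)) ^+ i.
Proof.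
move=> d2; have d0 : (0 < d)%N by apply: leq_trans d2.
set z := d.-root (-1 : algC).
have zd : z ^+ d = -1 by rewrite /z rootCK.
have nz : `|z| = 1 by apply: (unit_norm d0); right.
have zc : z * z^* = 1 by rewrite -normCK nz expr1n.
have u0 : 1 + z != 0.
  apply/eqP => e; have ze : z = -1 by apply/eqP; rewrite -subr_eq0 opprK addrC e.
  have [w pw] := C_prim_root_exists d0.
  have wd : w ^+ d = 1 by apply/eqP; rewrite -(prim_order_dvd pw).
  have w1 : w != 1.
    apply/eqP => w1; have := prim_order_dvd pw 1; rewrite w1 expr1n eqxx.
    by move/dvdn_leq => /(_ isT); rewrite leqNgt d2.
  have oddd : (-1 : algC) ^+ d = -1 by rewrite -[X in X ^+ d]ze.
  have [y [yd yI yw]] : exists y : algC, [/\ y ^+ d = -1, 0 <= 'Im y & (y = - w \/ y = - w^*)].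
    have : 'Im w \is Num.real by exact: Creal_Im.
    case/real_ge0P => hw.
      exists (- w^*); split; last by right.
      - by rewrite exprNn -rmorphXn wd rmorph1 mulr1.
      - by rewrite raddfN /= Im_conj opprK.
    exists (- w); split; last by left.
    - by rewrite exprNn wd mulr1.
    - by rewrite raddfN /= oppr_ge0 ltW.
  have := rootC_Re_max d0 yd yI; rewrite -/z ze.
  have -> : 'Re (-1 : algC) = -1 by apply/Creal_ReP; rewrite rpredN rpred1.
  rewrite -(opprK ('Re y)) -ReNeg lerN2 => hy.
  have ny : `|- y| = 1 by rewrite normrN; apply: (unit_norm d0); right.
  have y1 := unitRe ny hy.
  case: yw => ye; move: y1; rewrite ye opprK => w1'.
    by rewrite w1' eqxx in w1.
  by move: w1; rewrite -(conjCK w) w1' rmorph1 eqxx.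
split => //.
have [K n0] := Kre zc u0.
have aR : 'Re z \is Num.real by exact: Creal_Re.
pose a : algR := in_algR aR.
have a1 : a < 1.
  rewrite ltNge; apply/negP => ha.
  have z1 := unitRe nz ha.
  by move: zd; rewrite z1 expr1n => /eqP; rewrite -subr_eq0 opprK (pnatr_eq0 _ 2).
have am1 : -1 < a.
  rewrite ltNge; apply/negP => ha.
  have hz : 1 <= 'Re (- z) by rewrite ReNeg lerNr.
  have nz' : `|- z| = 1 by rewrite normrN.
  have := unitRe nz' hz => /eqP; rewrite eqr_oppLR -subr_eq0 opprK addrC.
  by rewrite (negPf u0).
pose k0 : algR := (2 + 2 * a)^-1.
have k0E : algRval k0 = z / (1 + z) ^+ 2 by rewrite K.
have k4 : 4^-1 < k0.
  rewrite /k0 ltf_pV2 ?posrE; lra.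
have qd : Qv k0 d = 0.
  apply: val_inj; rewrite /= Qv_val k0E.
  have := Qv_ident u0 d; rewrite zd addrN => /esym/eqP; rewrite mulf_eq0 expf_eq0 (negPf u0) andbF orbF.
  by move/eqP.
have [t [t4 tk qt qpos]] := ivt_part k4 qd.
have [y [yd [yI yR]]] := mk_root t4 qt.
have := rootC_Re_max d0 yd yI; rewrite -/z yR => hle.
have hle' : (2 * t)^-1 - 1 <= a by exact: hle.
have kt : k0 <= t.
  have t0 : 0 < t by apply: lt_trans t4; rewrite invr_gt0 ltr0n.
  have -> : t = ((2 * t)^-1 * 2)^-1 by field; rewrite ?pnatr_eq0 // lt0r_neq0.
  rewrite /k0 lef_pV2 ?posrE; try lra.
  by rewrite mulr_gt0 // invr_gt0 mulr_gt0.
have tk0 : t = k0 by apply/eqP; rewrite eq_le tk kt.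
move=> i id.
rewrite (Qv_ident u0 i) mulfK ?expf_neq0 // -k0E -Qv_val -tk0.
exact: qpos.
Qed.

Unset Implicit Arguments.

Theorem lemma5 (d r : nat) (G N : {poly int}) :
  (1 <= d)%N -> (r < d)%N -> is_G r G -> sum_h r = G * N ->
  (map_poly (fun z : int => z%:~R : algC) N).[zeta2 d] != 0.
Proof.
move=> d1 rd _ hGN.
set z := zeta2 d.
pose ev (p : {poly int}) := (map_poly intr p).[z].
have evM p q : ev (p * q) = ev p * ev q by rewrite /ev rmorphM hornerM.
change (ev N != 0).
suff : ev (sum_h r) != 0 by rewrite hGN evM mulf_eq0 negb_or => /andP[].
have evS : ev (sum_h r) = \sum_(f : partn r | is_partn f)
    \prod_(1 <= i < r.+1) (1 + z ^+ i) ^+ (r %/ i - mult f i)%N.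
  rewrite /ev /sum_h rmorph_sum horner_sum; apply: eq_bigr => f _.
  rewrite /hpoly rmorph_prod horner_prod; apply: eq_bigr => i _.
  by rewrite rmorphXn rmorphD rmorph1 /= map_polyXn !hornerE.
rewrite evS.
pose u := 1 + z.
pose pI i := (1 + z ^+ i) / u ^+ i.
have hp : forall i, (1 <= i < r.+1)%N -> 1 + z ^+ i = pI i * u ^+ i /\ 0 < pI i.
  move=> i /andP [i1 ir].
  have r1 : (1 <= r)%N by apply: leq_trans i1 _; rewrite -ltnS.
  have d2 : (2 <= d)%N by exact: leq_ltn_trans r1 rd.
  have [u0 hpos] := GK d2.
  split; last by apply: hpos; apply: leq_ltn_trans rd.
  by rewrite /pI divfK // expf_neq0.
have hu : u ^+ Kc r != 0.
  case: (posnP r) => [r0|rpos]; first by rewrite r0 /Kc big_geq // expr0 oner_eq0.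
  have [_ h] := hp 1%N (rpos : (1 <= 1 < r.+1)%N); rewrite expf_neq0 //.
  by move: h; rewrite /pI expr1 => /lt0r_neq0; rewrite mulf_eq0 negb_or => /andP[].
have term (f : partn r) : is_partn f -> \prod_(1 <= i < r.+1) (1 + z ^+ i) ^+ (r %/ i - mult f i)%N =
    (\prod_(1 <= i < r.+1) pI i ^+ (r %/ i - mult f i)%N) * u ^+ Kc r.
  move=> hf; rewrite -(expo_sum hf) -prodrXr -big_split /=.
  apply: eq_big_nat => i hi; have [-> _] := hp i hi.
  by rewrite exprMn exprM.
have pos (f : partn r) : is_partn f -> 0 < \prod_(1 <= i < r.+1) pI i ^+ (r %/ i - mult f i)%N.
  move=> hf; rewrite big_nat_cond; apply: prodr_gt0 => i /andP [hi _].
  by have [_ h] := hp i hi; rewrite exprn_gt0.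
rewrite (eq_bigr (fun f => (\prod_(1 <= i < r.+1) pI i ^+ (r %/ i - mult f i)%N) * u ^+ Kc r)); last first.
  by move=> f hf; rewrite term.
rewrite -mulr_suml mulf_neq0 //.
apply: lt0r_neq0; rewrite (bigD1 (f0 r)) ?f0_partn //=.
apply: (lt_le_trans (pos _ (f0_partn r))); rewrite lerDl.
by apply: sumr_ge0 => f /andP [hf _]; apply: ltW; apply: pos.
Qed.
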